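(* Let $\Gamma=\{\gamma_t=\exp(tA):t\in\mathbb R\}\subset GL(3,\mathbb R)$ with nonzero $A=(a_{ij})\in\mathfrak{gl}(3,\mathbb R)$, acting on $\mathbb{RP}^2$ by projective transformations. Let $\infty_Y=(0:1:0)$, $\pi:\mathbb{RP}^2\setminus\{\infty_Y\}\to\mathbb{RP}^1$, $\pi(x:y:z)=(x:z)$, $S_0=\{\infty_Y\}$, $S=\{(\gamma,p):\gamma(p)=\infty_Y\}$, and $L_0=\{(x,y)\in\mathbb R^2:a_{32}x=a_{12}\}$ if $a_{32}\ne0$; $L_0=\mathbb{RP}^2\setminus\mathbb R^2$ (the line at infinity) if $a_{32}=0$ and $a_{12}\neq0$; $L_0=\mathbb{RP}^2$ if $a_{32}=a_{12}=0$. Let $L=\{(\gamma,p):\gamma(p)\in L_0\}$ and $K=L\cup S$. Then $\Pi:\Gamma\times\mathbb{RP}^2\to\mathbb{RP}^1$, $\Pi(\gamma,p)=\pi(\gamma(p))$, is defined on $(\Gamma\times\mathbb{RP}^2)\setminus S$ and is locally transversal on $(\Gamma\times\mathbb{RP}^2)\setminus K$.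
   Context: Homogeneous coordinates: $(x:y:z)$ with $z\ne0$ is the finite point $(x/z,y/z)\in\mathbb R^2$; points with $z=0$ form the line at infinity; matrices act on homogeneous coordinates as on vectors. Transversality (here $k=m=1$), in smooth local coordinates: for $\Pi(t,p)$ put $\Phi(t,v,w)=\frac{\Pi(t,v)-\Pi(t,w)}{|v-w|}$ for $v\ne w$; $\Pi$ is transversal on $\Lambda\times\Omega$ if there is $C>0$ such that for all $t$ and $v\ne w$: if $|\Phi(t,v,w)|\le C$ then $|\partial_t\Phi(t,v,w)|\ge C$. Locally transversal: the domain can be covered by open sets on each of which (in local coordinates of parameter space, domain and target) the restriction is transversal. *)

(* Defs.v *)
From HB Require Import structures.
From mathcomp Require Import all_boot all_order all_algebra.
From mathcomp Require Import all_classical all_reals all_analysis.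
Set Implicit Arguments. Unset Strict Implicit. Unset Printing Implicit Defensive.
Import Order.TTheory GRing.Theory Num.Theory.
Import numFieldNormedType.Exports.
Local Open Scope classical_set_scope.
Local Open Scope ring_scope.

Section Defs.
Variable R : realType.

Definition expmx (A : 'M[R]_3) (t : R) : 'M[R]_3 :=
  \matrix_(i, j) limn (series (fun k : nat => t ^+ k / (k`!)%:R * (A ^+ k) i j)).

(* gamma_t(p) on homogeneous coordinates (column vectors) *)
Definition gact (A : 'M[R]_3) (t : R) (p : 'cV[R]_3) : 'cV[R]_3 :=
  expmx A t *m p.

Definition eY : 'cV[R]_3 := \col_k (if k == 1 :> nat then 1 else 0).

Definition isInfY (q : 'cV[R]_3) : Prop := exists c : R, c != 0 /\ q = c *: eY.

Definition inS (A : 'M[R]_3) (t : R) (p : 'cV[R]_3) : Prop := isInfY (gact A t p).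

(* the set L_0 (on homogeneous representatives q = (x:y:z), q <> 0);
   a_{ij} (1-based) is A (i-1) (j-1); a_{32} = A 2 1, a_{12} = A 0 1 *)
Definition inL0 (A : 'M[R]_3) (q : 'cV[R]_3) : Prop :=
  if A 2%:R 1%:R != 0 then
    q 2%:R 0 != 0 /\ A 2%:R 1%:R * (q 0 0 / q 2%:R 0) = A 0 1%:R
  else if A 0 1%:R != 0 then q 2%:R 0 = 0
  else True.

Definition inL (A : 'M[R]_3) (t : R) (p : 'cV[R]_3) : Prop := inL0 A (gact A t p).

Definition inK (A : 'M[R]_3) (t : R) (p : 'cV[R]_3) : Prop := inL A t p \/ inS A t p.

(* standard affine charts of RP^2: chart i is {p_i <> 0};
   lift2 i v is the representative with 1 in position i and the
   coordinates v.1, v.2 in the remaining positions (in increasing order) *)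
Definition lift2 (i : 'I_3) (v : R * R) : 'cV[R]_3 :=
  \col_k (if k == i then 1
          else if ((k == 0 :> nat) || ((k == 1 :> nat) && (i == 0 :> nat)))
               then v.1 else v.2).

Definition chart2 (i : 'I_3) (p : 'cV[R]_3) : R * R :=
  let a : 'I_3 := if i == 0 :> nat then 1 else 0 in
  let b : 'I_3 := if i == 2 :> nat then 1 else 2%:R in
  (p a 0 / p i 0, p b 0 / p i 0).

(* pi(x:y:z) = (x:z) in RP^1, read in the two standard charts of RP^1:
   chart true  = {z <> 0}, coordinate x/z ;
   chart false = {x <> 0}, coordinate z/x *)
Definition pi_dom (j : bool) (q : 'cV[R]_3) : Prop :=
  if j then q 2%:R 0 != 0 else q 0 0 != 0.
Definition pi_chart (j : bool) (q : 'cV[R]_3) : R :=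
  if j then q 0 0 / q 2%:R 0 else q 2%:R 0 / q 0 0.

Definition Pi_loc (A : 'M[R]_3) (i : 'I_3) (j : bool) (t : R) (v : R * R) : R :=
  pi_chart j (gact A t (lift2 i v)).

Definition norm2 (v : R * R) : R := Num.sqrt (v.1 ^+ 2 + v.2 ^+ 2).

Definition Phi (F : R -> R * R -> R) (t : R) (v w : R * R) : R :=
  (F t v - F t w) / norm2 (v.1 - w.1, v.2 - w.2).

(* transversality (k = m = 1) of F on the (local-coordinate) set W *)
Definition transversal_on (F : R -> R * R -> R) (W : set (R * (R * R))) : Prop :=
  exists C : R, 0 < C /\
    forall (t : R) (v w : R * R), W (t, v) -> W (t, w) -> v <> w ->
      `|Phi F t v w| <= C -> C <= `|derive1 (fun s => Phi F s v w) t|.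

End Defs.

(* Main.v *)
Require Import Defs.
From HB Require Import structures.
From mathcomp Require Import all_boot all_order all_algebra.
From mathcomp Require Import all_classical all_reals all_analysis.
From mathcomp Require Import ring lra.
Import Order.TTheory GRing.Theory Num.Theory.
Import numFieldNormedType.Exports.
Local Open Scope classical_set_scope.
Local Open Scope ring_scope.

Section PS.
Variable R : realType.

Lemma pser_cvg (c : nat -> R) (B C0 : R) : 0 <= B ->
  (forall k, `|c k| <= C0 * (B ^+ k / k`!%:R)) -> forall x, cvgn (pseries c x).
Proof.
move=> B0 Hc x; have C00 : 0 <= C0.
  by have := Hc 0%N; rewrite expr0 fact0 divr1 mulr1; apply: le_trans.
apply: normed_cvg.
apply: (@series_le_cvg _ _ (C0 *: exp_coeff (B * `|x|))).
- by move=> n; exact: normr_ge0.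
- move=> n /=; rewrite /exp_coeff /=; apply: mulr_ge0 => //.
  by apply: divr_ge0 => //; apply: exprn_ge0; apply: mulr_ge0.
- move=> n /=; rewrite /exp_coeff /= normrM normrX.
  rewrite (_ : (C0 *: _) n = (C0 * (B ^+ n / n`!%:R)) * `|x| ^+ n); last first.
    by rewrite (_ : (C0 *: _) n = C0 * ((B * `|x|) ^+ n / n`!%:R)) // exprMn; ring.
  by apply: ler_wpM2r => //; apply: exprn_ge0.
- exact/is_cvg_seriesZ/is_cvg_series_exp_coeff.
Qed.

Lemma sum3 (F : 'I_3 -> R) : \sum_(i < 3) F i = F 0 + F 1 + F 2%:R.
Proof.
rewrite !big_ord_recl big_ord0 addr0 addrA.
by congr (F _ + F _ + F _); apply: val_inj.
Qed.

Definition bA (A : 'M[R]_3) : R := \sum_(i < 3) \sum_(j < 3) `|A i j|.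

Lemma bA_ge0 (A : 'M[R]_3) : 0 <= bA A.
Proof. by apply: sumr_ge0 => i _; apply: sumr_ge0 => j _. Qed.

Lemma row_le_bA (A : 'M[R]_3) i : \sum_(l < 3) `|A i l| <= bA A.
Proof.
rewrite /bA [leRHS](bigD1 i) //= lerDl.
by apply: sumr_ge0 => i' _; apply: sumr_ge0 => j _.
Qed.

Lemma pow_bound (A : 'M[R]_3) k i j : `|(A ^+ k) i j| <= bA A ^+ k.
Proof.
elim: k i j => [|k IH] i j.
  by rewrite expr0 mxE; case: (i == j); rewrite ?normr1 ?normr0.
rewrite exprS -mulmxE mxE exprS.
apply: le_trans (ler_norm_sum _ _ _) _.
apply: le_trans (_ : \sum_(l < 3) `|A i l| * bA A ^+ k <= _).
  by apply: ler_sum => l _; rewrite normrM; apply: ler_wpM2l => //.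
by rewrite -mulr_suml; apply: ler_wpM2r; [apply: exprn_ge0; apply: bA_ge0|apply: row_le_bA].
Qed.

Definition coef (A : 'M[R]_3) i j (k : nat) : R := (A ^+ k) i j / k`!%:R.

Lemma expmxE (A : 'M[R]_3) t i j : expmx A t i j = limn (pseries (coef A i j) t).
Proof.
rewrite mxE /pseries /coef; congr (limn (series _)).
by apply/funext => k /=; ring.
Qed.

Lemma coef_diffs (A : 'M[R]_3) i j : pseries_diffs (coef A i j) = fun k => (A ^+ k.+1) i j / k`!%:R.
Proof.
apply/funext => k; rewrite /pseries_diffs /coef factS natrM invfM.
by field; rewrite nat1r !pnatr_eq0 -!lt0n fact_gt0.
Qed.

Lemma coef_cvg (A : 'M[R]_3) i j x : cvgn (pseries (coef A i j) x).
Proof.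
apply: (@pser_cvg _ (bA A) 1 (bA_ge0 A)) => k.
rewrite /coef mul1r normrM [`|_^-1|]ger0_norm ?invr_ge0 //; apply: ler_wpM2r => //.
exact: pow_bound.
Qed.

Lemma coefd_cvg (A : 'M[R]_3) i j x : cvgn (pseries (pseries_diffs (coef A i j)) x).
Proof.
apply: (@pser_cvg _ (bA A) (bA A) (bA_ge0 A)) => k.
rewrite coef_diffs normrM [`|_^-1|]ger0_norm ?invr_ge0 // mulrA -exprS; apply: ler_wpM2r => //.
exact: pow_bound.
Qed.

Lemma coefdd_cvg (A : 'M[R]_3) i j x : cvgn (pseries (pseries_diffs (pseries_diffs (coef A i j))) x).
Proof.
apply: (@pser_cvg _ (bA A) (bA A ^+ 2) (bA_ge0 A)) => k.
rewrite coef_diffs /pseries_diffs.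
rewrite (_ : k.+1%:R * ((A ^+ k.+2) i j / (k.+1)`!%:R) = (A ^+ k.+2) i j / k`!%:R); last first.
  by rewrite factS natrM; field; rewrite nat1r !pnatr_eq0 -!lt0n fact_gt0.
rewrite normrM [`|_^-1|]ger0_norm ?invr_ge0 // mulrA -exprD; apply: ler_wpM2r => //.
exact: pow_bound.
Qed.

Lemma pser_mx_deriv (A : 'M[R]_3) (t : R) i j :
  is_derive t (1:R) (fun s : R => limn (pseries (coef A i j) s))
     (limn (pseries (pseries_diffs (coef A i j)) t)).
Proof.
apply: (@pseries_snd_diffs _ _ (`|t| + 1)).
- exact: coef_cvg.
- exact: coefd_cvg.
- exact: coefdd_cvg.
- by rewrite [ltRHS]ger0_norm ?ltrDl // addr_ge0.
Qed.


End PS.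
Arguments coef {R}.
Arguments bA {R}.
Section S2.
Variable R : realType.
Definition sq (A : 'M[R]_3) l j t := fun k => coef A l j k * t ^+ k.

Lemma sq_cvg (A : 'M[R]_3) l j t : cvgn (series (sq A l j t)).
Proof. exact: coef_cvg. Qed.

Lemma diffs_lim_l (A : 'M[R]_3) t i j :
  limn (pseries (pseries_diffs (coef A i j)) t) = (A *m expmx A t) i j.
Proof.
have Ef : [sequence pseries_diffs (coef A i j) k * t ^+ k]_k =
   A i 0 *: sq A 0 j t + A i 1 *: sq A 1 j t + A i 2%:R *: sq A 2%:R j t.
  apply/funext => k /=; rewrite coef_diffs /sq /coef exprS -mulmxE mxE sum3 /=.
  rewrite !fctE /GRing.scale /=. ring.
rewrite /pseries Ef.
have c0 := sq_cvg A 0 j t; have c1 := sq_cvg A 1 j t; have c2 := sq_cvg A 2%:R j t.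
rewrite lim_seriesD; last exact: is_cvg_seriesZ.
  2: by apply: is_cvg_seriesD; apply: is_cvg_seriesZ.
rewrite lim_seriesD; [|exact: is_cvg_seriesZ|exact: is_cvg_seriesZ].
rewrite !lim_seriesZ // mxE sum3 !expmxE.
by [].
Qed.

Lemma diffs_lim_r (A : 'M[R]_3) t i j :
  limn (pseries (pseries_diffs (coef A i j)) t) = (expmx A t *m A) i j.
Proof.
have Ef : [sequence pseries_diffs (coef A i j) k * t ^+ k]_k =
   A 0 j *: sq A i 0 t + A 1 j *: sq A i 1 t + A 2%:R j *: sq A i 2%:R t.
  apply/funext => k /=; rewrite coef_diffs /sq /coef exprSr -mulmxE mxE sum3 /=.
  rewrite !fctE /GRing.scale /=. ring.
rewrite /pseries Ef.
have c0 := sq_cvg A i 0 t; have c1 := sq_cvg A i 1 t; have c2 := sq_cvg A i 2%:R t.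
rewrite lim_seriesD; last exact: is_cvg_seriesZ.
  2: by apply: is_cvg_seriesD; apply: is_cvg_seriesZ.
rewrite lim_seriesD; [|exact: is_cvg_seriesZ|exact: is_cvg_seriesZ].
rewrite !lim_seriesZ // mxE sum3 !expmxE /GRing.scale /=.
rewrite /pseries /sq. ring.
Qed.

Global Instance expmx_is_derive (A : 'M[R]_3) (t : R) i j :
  is_derive t (1:R) (fun s => expmx A s i j) ((A *m expmx A t) i j).
Proof.
rewrite -(diffs_lim_l A t i j) (_ : (fun s => expmx A s i j) = (fun s => limn (pseries (coef A i j) s))).
  exact: pser_mx_deriv.
by apply/funext => s; rewrite expmxE.
Qed.

Lemma expmx_is_derive_r (A : 'M[R]_3) (t : R) i j :
  is_derive t (1:R) (fun s => expmx A s i j) ((expmx A t *m A) i j).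
Proof. by rewrite -(diffs_lim_r A t i j) (diffs_lim_l A t i j); exact: expmx_is_derive. Qed.

Lemma expmx_cont (A : 'M[R]_3) i j : continuous (fun s => expmx A s i j).
Proof.
move=> t; apply/differentiable_continuous/derivable1_diffP.
exact: (@ex_derive _ _ _ _ _ _ _ (expmx_is_derive A t i j)).
Qed.

Lemma expmx0 (A : 'M[R]_3) : expmx A 0 = 1%:M.
Proof.
apply/matrixP => i j; rewrite mxE.
apply: lim_near_cst => //.
near=> m; rewrite -[m]prednK; last by near: m; exists 1%N.
rewrite /series /= big_nat_recl // big1 ?addr0.
  by rewrite expr0 fact0 divr1 mul1r expr0.
by move=> k _; rewrite expr0n /= mul0r mul0r.
Unshelve. all: by end_near.
Qed.

Global Instance expmxN_is_derive (A : 'M[R]_3) (t : R) i j :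
  is_derive t (1:R) (fun s => expmx A (- s) i j) (- (A *m expmx A (- t)) i j).
Proof.
have := @is_derive1_comp R (fun s => expmx A s i j) (fun s => - s) t _ (-1)
  (expmx_is_derive A (- t) i j) _.
by rewrite mulrN1; apply.
Qed.

Lemma expmxK (A : 'M[R]_3) t : expmx A t *m expmx A (- t) = 1%:M.
Proof.
apply/matrixP => i j.
pose F := fun s => (expmx A s *m expmx A (- s)) i j.
have -> : (expmx A t *m expmx A (- t)) i j = F t by [].
have -> : 1%:M i j = F 0 by rewrite /F oppr0 expmx0 mul1mx.
apply: is_derive_0_is_cst => s.
have -> : F = fun s => expmx A s i 0 * expmx A (- s) 0 j +
   expmx A s i 1 * expmx A (- s) 1 j + expmx A s i 2%:R * expmx A (- s) 2%:R j.
  by apply/funext => u; rewrite /F mxE sum3.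
pose e l m := fun u => expmx A u l m.
pose f l m := fun u => expmx A (- u) l m.
have H := is_deriveD (is_deriveD (is_deriveM (expmx_is_derive_r A s i 0) (expmxN_is_derive A s 0 j))
   (is_deriveM (expmx_is_derive_r A s i 1) (expmxN_is_derive A s 1 j)))
   (is_deriveM (expmx_is_derive_r A s i 2%:R) (expmxN_is_derive A s 2%:R j)).
apply: is_derive_eq H _.
rewrite /GRing.scale /=; move: (expmx A s) (expmx A (- s)) => M N.
rewrite !mxE !sum3; ring.
Qed.
End S2.
Set Implicit Arguments.
Unset Strict Implicit.
Section CT.
Variable R : realType.
Definition CT (c : R * (R * R)) (f : R * (R * R) -> R) := f x @[x --> c] --> f c.

Lemma CT_fst c (g : R -> R) : continuous g -> CT c (fun x => g x.1).
Proof.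
move=> gc; rewrite /CT.
apply: (@cvg_comp _ _ _ fst g _ _ _ (@cvg_fst _ _ _ _ _) (gc c.1)).
Qed.
Lemma CT_v1 c : CT c (fun x => x.2.1).
Proof.
rewrite /CT.
apply: (@cvg_comp _ _ _ snd fst _ _ _ (@cvg_snd _ _ _ _ _) (@cvg_fst _ _ _ _ _)).
Qed.
Lemma CT_v2 c : CT c (fun x => x.2.2).
Proof.
rewrite /CT.
apply: (@cvg_comp _ _ _ snd snd _ _ _ (@cvg_snd _ _ _ _ _) (@cvg_snd _ _ _ _ _)).
Qed.
Lemma CT_cst c (k : R) : CT c (fun _ => k).
Proof. exact: cvg_cst. Qed.
Lemma CT_add c f g : CT c f -> CT c g -> CT c (fun x => f x + g x).
Proof. by move=> hf hg; apply: cvgD. Qed.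
Lemma CT_sub c f g : CT c f -> CT c g -> CT c (fun x => f x - g x).
Proof. by move=> hf hg; apply: cvgB. Qed.
Lemma CT_mul c f g : CT c f -> CT c g -> CT c (fun x => f x * g x).
Proof. by move=> hf hg; apply: cvgM. Qed.
Lemma CT_opp c f : CT c f -> CT c (fun x => - f x).
Proof. by move=> hf; apply: cvgN. Qed.
Lemma CT_norm c f : CT c f -> CT c (fun x => `|f x|).
Proof. by move=> hf; apply: cvg_norm. Qed.

Lemma CT_lt c f (e : R) : CT c f -> f c < e -> \forall x \near c, f x < e.
Proof.
move=> hf fe; have := hf; move/cvgrPdist_lt => /(_ (e - f c)); rewrite subr_gt0 => /(_ fe).
apply: filterS => x /=; rewrite -normrN opprB => H.
have := ler_norm (f x - f c); lra.
Qed.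

Lemma CT_gt c f (e : R) : CT c f -> e < f c -> \forall x \near c, e < f x.
Proof.
move=> hf fe; have := @CT_lt c (fun x => - f x) (- e) (@CT_opp c f hf); rewrite ltrN2 => /(_ fe).
by apply: filterS => x; rewrite ltrN2.
Qed.
End CT.
Section Core.
Variable R : realType.
Implicit Types (a b da db : 'I_3 -> R) (v : R * R).

Definition lin a v := a 0 + a 1 * v.1 + a 2%:R * v.2.
Definition cc a b := a 1 * b 2%:R - a 2%:R * b 1.
Definition dcc a b da db := da 1 * b 2%:R + a 1 * db 2%:R - da 2%:R * b 1 - a 2%:R * db 1.
Definition G1 a b v := b 0 * a 1 - a 0 * b 1 + cc a b * v.2.
Definition G2 a b v := b 0 * a 2%:R - a 0 * b 2%:R - cc a b * v.1.
Definition K1 a b da db v :=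
  db 0 * a 1 + b 0 * da 1 - da 0 * b 1 - a 0 * db 1 + dcc a b da db * v.2.
Definition K2 a b da db v :=
  db 0 * a 2%:R + b 0 * da 2%:R - da 0 * b 2%:R - a 0 * db 2%:R - dcc a b da db * v.1.
Definition delta a b da db v := G1 a b v * K2 a b da db v - G2 a b v * K1 a b da db v.

Lemma num_id a b v w :
  lin a v * lin b w - lin a w * lin b v =
  G1 a b v * (v.1 - w.1) + G2 a b v * (v.2 - w.2).
Proof. rewrite /lin /G1 /G2 /cc; ring. Qed.

Lemma dnum_id a b da db v w :
  lin da v * lin b w + lin a v * lin db w - lin da w * lin b v - lin a w * lin db v =
  K1 a b da db v * (v.1 - w.1) + K2 a b da db v * (v.2 - w.2).
Proof. rewrite /lin /K1 /K2 /dcc; ring. Qed.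

Lemma key_ineq (C m n g k P Pd P1 P2 : R) :
  0 < n -> 0 < `|P| -> 0 <= m -> `|P| <= P1 -> `|Pd| <= P2 -> 0 <= P2 -> 0 <= C ->
  C * (2 * P1 + P2) <= m ->
  m * n <= `|g| + `|k| -> `|g| <= C * `|P| * n ->
  C * `|P| ^+ 2 * n <= `|k * P - g * Pd|.
Proof.
move=> n0 P0 m0 PP1 PdP2 P20 C0 Cm mgk gC.
apply: le_trans (lerB_dist _ _); rewrite !normrM.
have k0 := normr_ge0 k; have g0 := normr_ge0 g; have pd0 := normr_ge0 Pd.
set K := `|k| in mgk k0 *; set Gn := `|g| in mgk gC g0 *; set Pn := `|P| in P0 PP1 gC *.
set Q := `|Pd| in PdP2 pd0 *.
have h1 : (m * n - Gn) * Pn <= K * Pn by apply: ler_wpM2r; [lra|lra].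
have h2 : Gn * Q <= C * Pn * n * P2.
  apply: le_trans (_ : Gn * P2 <= _); first by apply: ler_wpM2l.
  by apply: ler_wpM2r.
have h3 : C * Pn * n * (2 * Pn + P2) <= C * Pn * n * (2 * P1 + P2).
  have cpn : 0 <= C * Pn * n by rewrite -mulrA; apply: mulr_ge0 => //; apply: mulr_ge0; lra.
  by apply: ler_wpM2l => //; lra.
have h4 : C * Pn * n * (2 * P1 + P2) <= m * Pn * n.
  have pn : 0 <= Pn * n by apply: mulr_ge0; lra.
  nra.
nra.
Qed.

Lemma lower_ab (g1 g2 k1 k2 h1 h2 d0 S n : R) :
  0 < n -> n ^+ 2 = h1 ^+ 2 + h2 ^+ 2 -> 0 < S -> d0 <= `|g1 * k2 - g2 * k1| ->
  `|g1| + `|g2| + `|k1| + `|k2| <= S ->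
  d0 / S * n <= `|g1 * h1 + g2 * h2| + `|k1 * h1 + k2 * h2|.
Proof.
move=> n0 nh S0 dd sS.
set g := g1 * h1 + g2 * h2; set k := k1 * h1 + k2 * h2.
set dl := g1 * k2 - g2 * k1.
have e1 : dl * h1 = k2 * g - g2 * k by rewrite /dl /g /k; ring.
have e2 : dl * h2 = g1 * k - k1 * g by rewrite /dl /g /k; ring.
have nh12 : n <= `|h1| + `|h2|.
  have q1 := real_normK (num_real h1); have q2 := real_normK (num_real h2).
  have := normr_ge0 h1; have := normr_ge0 h2.
  nra.
have b1 : `|dl| * `|h1| <= `|k2| * `|g| + `|g2| * `|k|.
  by rewrite -normrM e1; apply: le_trans (ler_normB _ _) _; rewrite !normrM.
have b2 : `|dl| * `|h2| <= `|g1| * `|k| + `|k1| * `|g|.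
  by rewrite -normrM e2; apply: le_trans (ler_normB _ _) _; rewrite !normrM.
rewrite mulrAC ler_pdivrMr //.
have := normr_ge0 g; have := normr_ge0 k; have := normr_ge0 g1; have := normr_ge0 g2.
have := normr_ge0 k1; have := normr_ge0 k2; have := normr_ge0 dl.
have := normr_ge0 h1; have := normr_ge0 h2.
move: (`|g|) (`|k|) (`|g1|) (`|g2|) (`|k1|) (`|k2|) (`|dl|) (`|h1|) (`|h2|) b1 b2 dd sS nh12.
move=> G K G1 G2 K1 K2 DL H1 H2 b1 b2 dd sS nh12 *.
have dn : d0 * n <= DL * (H1 + H2).
  have [d00|d00] := leP 0 d0; first by nra.
  by nra.
nra.
Qed.

Lemma lin_derive (a da : 'I_3 -> R -> R) v t :
  (forall l, is_derive t (1:R) (a l) (da l t)) ->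
  is_derive t (1:R) (fun s => lin (fun l => a l s) v) (lin (fun l => da l t) v).
Proof.
move=> Ha.
have H := is_deriveD (is_deriveD (Ha 0) (is_deriveM (Ha 1) (@is_derive_cst _ R^o R^o v.1 t 1)))
  (is_deriveM (Ha 2%:R) (@is_derive_cst _ R^o R^o v.2 t 1)).
apply: is_derive_eq H _.
rewrite /lin /GRing.scale /=; ring.
Qed.

Lemma phi_derive (a b da db : 'I_3 -> R -> R) v w t (n : R) :
  (forall l, is_derive t (1:R) (a l) (da l t)) ->
  (forall l, is_derive t (1:R) (b l) (db l t)) ->
  lin (fun l => b l t) v != 0 -> lin (fun l => b l t) w != 0 -> n != 0 ->
  let N u s := lin (fun l => a l s) u in
  let D u s := lin (fun l => b l s) u in
  let dN u := lin (fun l => da l t) u in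
  let dD u := lin (fun l => db l t) u in
  is_derive t (1:R) (fun s => (N v s / D v s - N w s / D w s) / n)
    (((dN v * D v t - N v t * dD v) / (D v t) ^+ 2
      - (dN w * D w t - N w t * dD w) / (D w t) ^+ 2) / n).
Proof.
move=> Ha Hb Dv Dw hn N D dN dD.
have HNv := lin_derive v Ha; have HNw := lin_derive w Ha.
have HDv := @is_deriveV R (fun s => lin (b^~ s) v) t _ 1 Dv (lin_derive v Hb).
have HDw := @is_deriveV R (fun s => lin (b^~ s) w) t _ 1 Dw (lin_derive w Hb).
have H := is_deriveM (is_deriveB (is_deriveM HNv HDv) (is_deriveM HNw HDw))
   (@is_derive_cst _ R^o R^o n^-1 t 1).
apply: is_derive_eq H _.
rewrite /GRing.scale /=.
rewrite /N /D /dN /dD; field.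
by rewrite hn Dv Dw.
Qed.

Lemma final_step (C m n g k P Pd P1 P2 : R) :
  0 < n -> P != 0 -> 0 <= m -> `|P| <= P1 -> `|Pd| <= P2 -> 0 <= P2 -> 0 <= C ->
  C * (2 * P1 + P2) <= m ->
  m * n <= `|g| + `|k| -> `|g / (P * n)| <= C ->
  C <= `|(k * P - g * Pd) / (P ^+ 2 * n)|.
Proof.
move=> n0 P0 m0 PP1 PdP2 P20 C0 Cm mgk hg.
have Pn : 0 < `|P| by rewrite normr_gt0.
have Pn2 : 0 < `|P| ^+ 2 * n by apply: mulr_gt0 => //; apply: exprn_gt0.
rewrite normrM normfV normrM normrX [`|n|]gtr0_norm // ler_pdivlMr //.
rewrite mulrA; apply: (@key_ineq C m n g k P Pd P1 P2) => //.
move: hg; rewrite normrM normfV normrM [`|n|]gtr0_norm // ler_pdivrMr //; last first.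
  by apply: mulr_gt0.
by rewrite mulrA.
Qed.

Lemma der_cont (f df : R -> R) : (forall t, is_derive t (1:R) f (df t)) -> continuous f.
Proof.
move=> Hf t; apply/differentiable_continuous/derivable1_diffP.
by case: (Hf t).
Qed.

Ltac ct H1 H2 H3 H4 :=
  lazymatch goal with
  | |- CT _ (fun x => @?F x + @?G x) =>
      apply: (CT_add (f:=F) (g:=G)); [ct H1 H2 H3 H4 | ct H1 H2 H3 H4]
  | |- CT _ (fun x => @?F x * @?G x) =>
      apply: (CT_mul (f:=F) (g:=G)); [ct H1 H2 H3 H4 | ct H1 H2 H3 H4]
  | |- CT _ (fun x => - @?F x) => apply: (CT_opp (f:=F)); ct H1 H2 H3 H4
  | |- CT _ (fun x => `|@?F x|) => apply: (CT_norm (f:=F)); ct H1 H2 H3 H4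
  | |- CT _ (fun x => x.2.1) => apply: CT_v1
  | |- CT _ (fun x => x.2.2) => apply: CT_v2
  | |- CT _ (fun x => ?g x.1) =>
      apply: (CT_fst (g:=g)); solve [apply: H1 | apply: H2 | apply: H3 | apply: H4]
  | |- CT _ (fun x => _) => apply: CT_cst
  end.

Lemma core (a b da db : 'I_3 -> R -> R) (t0 : R) (v0 : R * R) (Q : R * (R * R) -> Prop) :
  (forall l t, is_derive t (1:R) (a l) (da l t)) ->
  (forall l t, is_derive t (1:R) (b l) (db l t)) ->
  (forall l, continuous (da l)) -> (forall l, continuous (db l)) ->
  lin (fun l => b l t0) v0 != 0 ->
  delta (fun l => a l t0) (fun l => b l t0) (fun l => da l t0) (fun l => db l t0) v0 != 0 ->
  (\forall x \near (t0, v0), Q x) ->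
  exists W : set (R * (R * R)), [/\ open W, W (t0, v0),
     (forall t v, W (t, v) -> lin (fun l => b l t) v != 0 /\ Q (t, v))
     & transversal_on (fun t v => lin (fun l => a l t) v / lin (fun l => b l t) v) W].
Proof.
move=> Ha Hb cda cdb D0 del0 HQ.
have ca l : continuous (a l) := der_cont (Ha l).
have cb l : continuous (b l) := der_cont (Hb l).
have cab l : continuous (a l) /\ continuous (b l) by [].
have cdab l : continuous (da l) /\ continuous (db l) by [].
set c := (t0, v0).
pose fD x := lin (fun l => b l x.1) x.2.
pose fDd x := lin (fun l => db l x.1) x.2.
pose A (x : R * (R * R)) := fun l => a l x.1. pose B (x : R * (R * R)) := fun l => b l x.1.
pose dA (x : R * (R * R)) := fun l => da l x.1. pose dB (x : R * (R * R)) := fun l => db l x.1.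
pose fdel x := delta (A x) (B x) (dA x) (dB x) x.2.
pose fS x := `|G1 (A x) (B x) x.2| + `|G2 (A x) (B x) x.2| +
   `|K1 (A x) (B x) (dA x) (dB x) x.2| + `|K2 (A x) (B x) (dA x) (dB x) x.2|.
have cD : CT c fD.
  rewrite /fD /lin /=; ct ca cb cda cdb.
have cDd : CT c fDd.
  rewrite /fDd /lin /=; ct ca cb cda cdb.
have cdel : CT c fdel.
  rewrite /fdel /delta /G1 /G2 /K1 /K2 /cc /dcc /A /B /dA /dB /=; ct ca cb cda cdb.
have cS : CT c fS.
  rewrite /fS /G1 /G2 /K1 /K2 /cc /dcc /A /B /dA /dB /=; ct ca cb cda cdb.
pose d1 := `|fD c| + 1. pose d2 := `|fDd c| + 1.
pose dl0 := `|fdel c| / 2. pose S := fS c + 1.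
pose P x := [/\ fD x != 0, `|fD x| < d1, `|fDd x| < d2, dl0 < `|fdel x| & fS x < S /\ Q x].
have HP : \forall x \near c, P x.
  have hD : \forall x \near c, 0 < `|fD x|.
    by apply: (CT_gt (CT_norm cD)); rewrite normr_gt0.
  have hD1 : \forall x \near c, `|fD x| < d1.
    by apply: (CT_lt (CT_norm cD)); rewrite /d1 ltrDl.
  have hD2 : \forall x \near c, `|fDd x| < d2.
    by apply: (CT_lt (CT_norm cDd)); rewrite /d2 ltrDl.
  have hdl : \forall x \near c, dl0 < `|fdel x|.
    apply: (CT_gt (CT_norm cdel)); rewrite /dl0 ltr_pdivrMr // ltr_pMr ?ltr1n //.
    by rewrite normr_gt0.
  have hS : \forall x \near c, fS x < S.
    by apply: (CT_lt cS); rewrite /S ltrDl.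
  near=> x; split; first by rewrite -normr_gt0; near: x.
  - by near: x.
  - by near: x.
  - by near: x.
  - by split; near: x.
have Pin x : (interior P) x -> P x by move=> /interior_subset.
exists (interior P); split.
- exact: open_interior.
- exact: HP.
- by move=> t v /Pin [? _ _ _ [_ ?]].
pose m := dl0 / S. pose P1 := d1 ^+ 2. pose P2 := 2 * d1 * d2.
have d1p : 0 < d1 by rewrite /d1 ltr_pwDr.
have d2p : 0 < d2 by rewrite /d2 ltr_pwDr.
have Sp : 0 < S by rewrite /S ltr_pwDr // /fS !addr_ge0.
have mp : 0 < m by rewrite /m divr_gt0 // /dl0 divr_gt0 // normr_gt0.
have P1p : 0 < P1 by rewrite /P1 exprn_gt0.
have P2p : 0 < P2 by rewrite /P2 !mulr_gt0.
exists (m / (2 * P1 + P2)); split.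
  by rewrite divr_gt0 // addr_gt0 // mulr_gt0.
move=> t v w /Pin [Dv Dv1 Ddv dlv [Sv _]] /Pin [Dw Dw1 Ddw _ _] vw.
pose Av := fun l => a l t. pose Bv := fun l => b l t.
pose dAv := fun l => da l t. pose dBv := fun l => db l t.
pose h1 := v.1 - w.1. pose h2 := v.2 - w.2.
pose n := norm2 (h1, h2).
have hsum : 0 < h1 ^+ 2 + h2 ^+ 2.
  rewrite lt_def addr_ge0 ?sqr_ge0 // andbT.
  apply/negP => /eqP; move/eqP; rewrite paddr_eq0 ?sqr_ge0 // !sqrf_eq0 !subr_eq0.
  move=> /andP[/eqP e1 /eqP e2]; apply: vw; move: e1 e2; case: v {Dv Dv1 Ddv dlv Sv h1 h2 n}; case: w {Dw Dw1 Ddw}.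
  by move=> ? ? ? ? /= -> ->.
have hn : 0 < n by rewrite /n /norm2 /= sqrtr_gt0.
have nn : n ^+ 2 = h1 ^+ 2 + h2 ^+ 2 by rewrite /n /norm2 /= sqr_sqrtr // ltW.
have Dv' : lin Bv v != 0 by [].
have Dw' : lin Bv w != 0 by [].
have Hd := @phi_derive a b da db v w t n (fun l => Ha l t) (fun l => Hb l t) Dv' Dw'
  (lt0r_neq0 hn).
rewrite derive1E; case: Hd => _ ->.
set Nv := lin Av v; set Nw := lin Av w; set Dvv := lin Bv v; set Dww := lin Bv w.
set dNv := lin dAv v; set dNw := lin dAv w; set dDv := lin dBv v; set dDw := lin dBv w.
rewrite (_ : Phi _ t v w = (Nv / Dvv - Nw / Dww) / n) //.
pose g := G1 Av Bv v * h1 + G2 Av Bv v * h2.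
pose k := K1 Av Bv dAv dBv v * h1 + K2 Av Bv dAv dBv v * h2.
have eg : Nv * Dww - Nw * Dvv = g := num_id Av Bv v w.
have ek : dNv * Dww + Nv * dDw - dNw * Dvv - Nw * dDv = k := dnum_id Av Bv dAv dBv v w.
have nz : n != 0 := lt0r_neq0 hn.
rewrite (_ : (Nv / Dvv - Nw / Dww) / n = g / ((Dvv * Dww) * n)); last first.
  by rewrite -eg; field; rewrite nz Dv Dw.
rewrite (_ : ((dNv * Dvv - Nv * dDv) / Dvv ^+ 2 - (dNw * Dww - Nw * dDw) / Dww ^+ 2) / n
  = (k * (Dvv * Dww) - g * (dDv * Dww + Dvv * dDw)) / ((Dvv * Dww) ^+ 2 * n)); last first.
  by rewrite -eg -ek; field; rewrite nz Dv Dw.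
move=> hphi.
have Dv2 : Dvv != 0 := Dv. have Dw2 : Dww != 0 := Dw.
have hv1 : `|Dvv| < d1 := Dv1. have hw1 : `|Dww| < d1 := Dw1.
have hv2 : `|dDv| < d2 := Ddv. have hw2 : `|dDw| < d2 := Ddw.
have n1 := normr_ge0 Dvv; have n2 := normr_ge0 Dww.
have n3 := normr_ge0 dDv; have n4 := normr_ge0 dDw.
apply: (@final_step _ m n g k _ _ P1 P2).
- exact: hn.
- by rewrite mulf_neq0.
- exact: ltW.
- rewrite normrM /P1 expr2; apply: ler_pM => //; exact: ltW.
- apply: le_trans (ler_normD _ _) _; rewrite !normrM /P2.
  have e1 : `|dDv| * `|Dww| <= d2 * d1 by apply: ler_pM => //; exact: ltW.
  have e2 : `|Dvv| * `|dDw| <= d1 * d2 by apply: ler_pM => //; exact: ltW.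
  lra.
- exact: ltW.
- by rewrite divr_ge0 // ltW // addr_gt0 // mulr_gt0.
- by rewrite divfK // lt0r_neq0 // addr_gt0 // mulr_gt0.
- apply: (@lower_ab _ _ _ _ h1 h2 dl0 S n).
  + exact: hn.
  + exact: nn.
  + exact: Sp.
  + exact: ltW dlv.
  + exact: ltW Sv.
- exact hphi.
Unshelve. all: by end_near.
Qed.
End Core.
Set Implicit Arguments.
Unset Strict Implicit.
Section Main.
Variable R : realType.

Definition ci (i l : 'I_3) : 'I_3 :=
  if l == 0 then i else if l == 1 then (if i == 0 :> nat then 1 else 0)
  else (if i == 2 :> nat then 1 else 2%:R).

Lemma ord3 (i : 'I_3) : [\/ i = 0, i = 1 | i = 2%:R].
Proof.
case: i => [[|[|[|?]]] Hi] //; [apply: Or31 | apply: Or32 | apply: Or33]; exact: val_inj.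
Qed.

Lemma lift2E (i : 'I_3) (v : R * R) (k : 'I_3) :
  lift2 i v (ci i k) 0 = if k == 0 then 1 else if k == 1 then v.1 else v.2.
Proof.
rewrite /lift2 /ci mxE.
by case: (ord3 i) => ->; case: (ord3 k) => ->.
Qed.

Lemma gact_lift (A : 'M[R]_3) t (i : 'I_3) v (r : 'I_3) :
  gact A t (lift2 i v) r 0 = lin (fun l => expmx A t r (ci i l)) v.
Proof.
rewrite /gact /lin; move: (expmx A t) => E.
rewrite mxE sum3 /lift2 /ci !mxE.
by case: (ord3 i) => -> /=; ring.
Qed.

Lemma chart_lift (i : 'I_3) (p : 'cV[R]_3) : p i 0 != 0 ->
  lift2 i (chart2 i p) = (p i 0)^-1 *: p.
Proof.
move=> hp; apply/matrixP => k l; rewrite (ord1 l) /lift2 /chart2 !mxE.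
case: (ord3 i) hp => -> hp; case: (ord3 k) => -> /=; rewrite ?mulVf // mulrC //.
Qed.

Lemma gactZ (A : 'M[R]_3) t c (p : 'cV[R]_3) : gact A t (c *: p) = c *: gact A t p.
Proof. by rewrite /gact scalemxAr. Qed.

Definition det3 (m : 'I_3 -> 'I_3 -> R) :=
  m 0 0 * (m 1 1 * m 2%:R 2%:R - m 1 2%:R * m 2%:R 1)
  - m 0 1 * (m 1 0 * m 2%:R 2%:R - m 1 2%:R * m 2%:R 0)
  + m 0 2%:R * (m 1 0 * m 2%:R 1 - m 1 1 * m 2%:R 0).

Lemma det3_mul (m n : 'I_3 -> 'I_3 -> R) :
  det3 m * det3 n = det3 (fun r s => m r 0 * n 0 s + m r 1 * n 1 s + m r 2%:R * n 2%:R s).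
Proof. rewrite /det3; ring. Qed.

Lemma delta_swap (a b da db : 'I_3 -> R) v : delta b a db da v = delta a b da db v.
Proof. rewrite /delta /G1 /G2 /K1 /K2 /cc /dcc; ring. Qed.

Lemma delta_id (m A : 'I_3 -> 'I_3 -> R) v :
  delta (fun c => m 0 c) (fun c => m 2%:R c)
    (fun c => A 0 0 * m 0 c + A 0 1 * m 1 c + A 0 2%:R * m 2%:R c)
    (fun c => A 2%:R 0 * m 0 c + A 2%:R 1 * m 1 c + A 2%:R 2%:R * m 2%:R c) v =
  det3 m * (A 0 1 * lin (fun c => m 2%:R c) v - A 2%:R 1 * lin (fun c => m 0 c) v).
Proof. rewrite /delta /G1 /G2 /K1 /K2 /cc /dcc /det3 /lin; ring. Qed.

Definition Xf (A : 'M[R]_3) (q : 'cV[R]_3) := A 2%:R 1 * q 0 0 - A 0 1 * q 2%:R 0.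

Lemma notL0 (A : 'M[R]_3) (q : 'cV[R]_3) : Xf A q != 0 -> ~ inL0 A q.
Proof.
rewrite /Xf /inL0 => hX.
case: ifPn => [h32 [hz he]|/negPn/eqP h32].
  move: hX; rewrite -he mulrA mulfVK // subrr; by rewrite eqxx.
case: ifPn => [h12 hz|/negPn/eqP h12 _]; move: hX; rewrite ?hz ?h32 ?h12 !mul0r ?mulr0 subrr eqxx //.
Qed.

Lemma L0X (A : 'M[R]_3) (q : 'cV[R]_3) : q 0 0 != 0 \/ q 2%:R 0 != 0 -> ~ inL0 A q -> Xf A q != 0.
Proof.
rewrite /Xf /inL0 => hq.
case: ifPn => [h32 hL|/negPn/eqP h32].
  have [hz|hz] := eqVneq (q 2%:R 0) 0; last first.
    apply/negP => /eqP e; apply: hL; split => //.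
    have e' : A 2%:R 1 * q 0 0 = A 0 1 * q 2%:R 0 by apply/eqP; rewrite -subr_eq0 e.
    by rewrite mulrA e' mulfK.
  rewrite hz mulr0 subr0 mulf_neq0 //; case: hq => //; by rewrite hz eqxx.
case: ifPn => [h12 hL|/negPn/eqP h12 hL]; last by exfalso; apply: hL.
rewrite h32 mul0r sub0r oppr_eq0 mulf_neq0 //; apply/negP => /eqP hz; exact: hL.
Qed.

Lemma XfZ (A : 'M[R]_3) c (q : 'cV[R]_3) : Xf A (c *: q) = c * Xf A q.
Proof. rewrite /Xf !mxE; ring. Qed.

Lemma isInfY_xz (q : 'cV[R]_3) : isInfY q -> q 0 0 = 0 /\ q 2%:R 0 = 0.
Proof. move=> [c [_ ->]]; rewrite /eY; split; rewrite !mxE /= ?mulr0 //. Qed.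

Lemma xz_isInfY (q : 'cV[R]_3) : q != 0 -> q 0 0 = 0 -> q 2%:R 0 = 0 -> isInfY q.
Proof.
move=> hq h0 h2; exists (q 1 0); split.
  apply: contra hq => /eqP h1; apply/eqP/matrixP => k l; rewrite (ord1 l) mxE.
  by case: (ord3 k) => ->.
apply/matrixP => k l; rewrite (ord1 l) /eY !mxE.
by case: (ord3 k) => -> /=; rewrite ?mulr1 ?mulr0.
Qed.

Lemma gact_inj (A : 'M[R]_3) t (p : 'cV[R]_3) : gact A t p = 0 -> p = 0.
Proof.
move=> h; have := @expmxK R A (- t); rewrite opprK => e.
by rewrite -[p]mul1mx -e -mulmxA -/(gact A t p) h mulmx0.
Qed.

Lemma det3_ci_neq0 (A : 'M[R]_3) t (i : 'I_3) : det3 (fun r l => expmx A t r (ci i l)) != 0.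
Proof.
have := det3_mul (fun r l => expmx A t r (ci i l)) (fun l s => expmx A (- t) (ci i l) s).
have -> : (fun r s => expmx A t r (ci i 0) * expmx A (- t) (ci i 0) s +
      expmx A t r (ci i 1) * expmx A (- t) (ci i 1) s +
      expmx A t r (ci i 2%:R) * expmx A (- t) (ci i 2%:R) s) = fun r s => (1%:M : 'M[R]_3) r s.
  apply/funext => r; apply/funext => s.
  rewrite -(@expmxK R A t); move: (expmx A t) (expmx A (- t)) => E F.
  rewrite mxE sum3 /ci; case: (ord3 i) => -> /=; ring.
move=> h; apply/eqP => h0; move: h; rewrite h0 mul0r {1}/det3 !mxE /= => h.
have : (0:R) == 1 by rewrite {1}h; apply/eqP; ring.
by rewrite eq_sym oner_eq0.
Qed.

Lemma cont_AE (A : 'M[R]_3) r c : continuous (fun s => (A *m expmx A s) r c).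
Proof.
have -> : (fun s => (A *m expmx A s) r c) = fun s => A r 0 * expmx A s 0 c +
    A r 1 * expmx A s 1 c + A r 2%:R * expmx A s 2%:R c.
  by apply/funext => s; move: (expmx A s) => E; rewrite mxE sum3.
move=> s.
exact (cvgD (cvgD (cvgM (cvg_cst (A r 0)) (@expmx_cont R A 0 c s))
   (cvgM (cvg_cst (A r 1)) (@expmx_cont R A 1 c s)))
   (cvgM (cvg_cst (A r 2%:R)) (@expmx_cont R A 2%:R c s))).
Qed.

Lemma CT_lin (f : 'I_3 -> R -> R) c : (forall l, continuous (f l)) ->
  CT c (fun x => lin (fun l => f l x.1) x.2).
Proof.
move=> hf; rewrite /lin /=.
apply: (CT_add (f := fun x => f 0 x.1 + f 1 x.1 * x.2.1)).
  apply: (CT_add (f := fun x => f 0 x.1)); first exact: CT_fst.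
  by apply: (CT_mul (f := fun x => f 1 x.1)); [exact: CT_fst|exact: CT_v1].
by apply: (CT_mul (f := fun x => f 2%:R x.1)); [exact: CT_fst|exact: CT_v2].
Qed.

Lemma part1 (A : 'M[R]_3) t (p : 'cV[R]_3) : p != 0 -> ~ inS A t p ->
  gact A t p 0 0 != 0 \/ gact A t p 2%:R 0 != 0.
Proof.
move=> hp hS.
have [h0|h0] := eqVneq (gact A t p 0 0) 0; last by left.
have [h2|h2] := eqVneq (gact A t p 2%:R 0) 0; last by right.
exfalso; apply: hS; apply: xz_isInfY => //.
by apply/eqP => /gact_inj hp0; move: hp; rewrite hp0 eqxx.
Qed.
End Main.

Theorem theorem4p1 (R : realType) (A : 'M[R]_3) (hA : A != 0) :
  (* Pi is defined on (Gamma x RP^2) \ S *)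
  (forall (t : R) (p : 'cV[R]_3), p != 0 -> ~ inS A t p ->
     gact A t p 0 0 != 0 \/ gact A t p 2%:R 0 != 0) /\
  (* Pi is locally transversal on (Gamma x RP^2) \ K *)
  (forall (t0 : R) (p0 : 'cV[R]_3), p0 != 0 -> ~ inK A t0 p0 ->
     exists (i : 'I_3) (j : bool) (W : set (R * (R * R))),
       [/\ p0 i 0 != 0, open W, W (t0, chart2 i p0),
           (forall (t : R) (v : R * R), W (t, v) ->
              pi_dom j (gact A t (lift2 i v)) /\ ~ inK A t (lift2 i v))
         & transversal_on (Pi_loc A i j) W]).
Proof.
split; first exact: part1.
move=> t0 p0 hp0 hK.
have [i hi] : exists i, p0 i 0 != 0.
  apply/not_existsP => hall; move/eqP: hp0; apply; apply/matrixP => k l.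
  rewrite (ord1 l) mxE; case: (eqVneq (p0 k 0) 0) => // h; exfalso; exact: (hall k).
have hS : ~ inS A t0 p0 by move=> h; apply: hK; right.
have hL : ~ inL A t0 p0 by move=> h; apply: hK; left.
have hxz := part1 hp0 hS.
have hX0 : Xf A (gact A t0 p0) != 0 := L0X hxz hL.
set q0 := gact A t0 p0 in hxz hX0.
set v0 := chart2 i p0.
pose cc0 := (p0 i 0)^-1.
have cc0n : cc0 != 0 by rewrite invr_eq0.
have el : gact A t0 (lift2 i v0) = cc0 *: q0 by rewrite /v0 chart_lift // gactZ.
have [j [xr [zr [Hch Hdom Hz Hzr Hdl]]]] : exists (j : bool) (xr zr : 'I_3),
   [/\ forall q : 'cV[R]_3, pi_chart j q = q xr 0 / q zr 0,
       forall q : 'cV[R]_3, pi_dom j q <-> q zr 0 != 0,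
       q0 zr 0 != 0,
       forall q : 'cV[R]_3, q zr 0 != 0 -> q 0 0 != 0 \/ q 2%:R 0 != 0 &
       forall (m g : 'I_3 -> 'I_3 -> R) v,
         delta (m xr) (m zr) (g xr) (g zr) v = delta (m 0) (m 2%:R) (g 0) (g 2%:R) v].
  have [hz|hz] := eqVneq (q0 2%:R 0) 0.
    exists false, 2%:R, 0; split => //.
    - by case: hxz => //; rewrite hz eqxx.
    - by move=> q; left.
    - by move=> m g v; rewrite delta_swap.
  exists true, 0, 2%:R; split => //.
  - by move=> q; right.
pose a (l : 'I_3) (s : R) := expmx A s xr (ci i l).
pose b (l : 'I_3) (s : R) := expmx A s zr (ci i l).
pose da (l : 'I_3) (s : R) := (A *m expmx A s) xr (ci i l).
pose db (l : 'I_3) (s : R) := (A *m expmx A s) zr (ci i l).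
have Ha : forall l t, is_derive t (1:R) (a l) (da l t) by move=> l t; exact: expmx_is_derive.
have Hb : forall l t, is_derive t (1:R) (b l) (db l t) by move=> l t; exact: expmx_is_derive.
have cda : forall l, continuous (da l) by move=> l; exact: cont_AE.
have cdb : forall l, continuous (db l) by move=> l; exact: cont_AE.
have ea t v r : gact A t (lift2 i v) r 0 = lin (fun l => expmx A t r (ci i l)) v := gact_lift A t i v r.
have D0 : lin (fun l => b l t0) v0 != 0.
  by rewrite /b -ea el mxE mulf_neq0.
pose m := fun r l => expmx A t0 r (ci i l).
pose g := fun r l => (A *m expmx A t0) r (ci i l).
have del0 : delta (fun l => a l t0) (fun l => b l t0) (fun l => da l t0) (fun l => db l t0) v0 != 0.
  have -> : delta (fun l => a l t0) (fun l => b l t0) (fun l => da l t0) (fun l => db l t0) v0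
     = delta (m xr) (m zr) (g xr) (g zr) v0 by [].
  rewrite Hdl.
  have eg r : g r = fun c => A r 0 * m 0 c + A r 1 * m 1 c + A r 2%:R * m 2%:R c.
    by apply/funext => c; rewrite /g /m; move: (expmx A t0) => E; rewrite mxE sum3.
  rewrite !eg delta_id.
  have e2 : lin (fun c => m 2%:R c) v0 = cc0 * q0 2%:R 0 by rewrite /m -ea el mxE.
  have e0 : lin (fun c => m 0 c) v0 = cc0 * q0 0 0 by rewrite /m -ea el mxE.
  rewrite e2 e0 mulf_neq0 //; first exact: det3_ci_neq0.
  rewrite (_ : _ - _ = - (cc0 * Xf A q0)); last by rewrite /Xf; ring.
  by rewrite oppr_eq0 mulf_neq0.
pose Q (x : R * (R * R)) := Xf A (gact A x.1 (lift2 i x.2)) != 0.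
pose fX (x : R * (R * R)) := A 2%:R 1 * lin (fun l => expmx A x.1 0 (ci i l)) x.2 -
   A 0 1 * lin (fun l => expmx A x.1 2%:R (ci i l)) x.2.
have cX : CT (t0, v0) fX.
  apply: (CT_sub (f := fun x => A 2%:R 1 * lin (fun l => expmx A x.1 0 (ci i l)) x.2)).
    apply: (CT_mul (f := fun _ => A 2%:R 1)); first exact: CT_cst.
    by apply: (CT_lin (f := fun l s => expmx A s 0 (ci i l))) => l; exact: expmx_cont.
  apply: (CT_mul (f := fun _ => A 0 1)); first exact: CT_cst.
  by apply: (CT_lin (f := fun l s => expmx A s 2%:R (ci i l))) => l; exact: expmx_cont.
have eX x : fX x = Xf A (gact A x.1 (lift2 i x.2)) by rewrite /Xf !ea.
have fX0 : 0 < `|fX (t0, v0)| by rewrite normr_gt0 eX /= el XfZ mulf_neq0.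
have HQ : \forall x \near (t0, v0), Q x.
  apply: filterS (CT_gt (CT_norm cX) fX0) => x hx.
  by rewrite /Q -eX -normr_gt0.
have [W [oW Wc HW tW]] := core Ha Hb cda cdb D0 del0 HQ.
exists i, j, W; split => //.
- move=> t v /HW [Dn Qx]; split.
    by apply/Hdom; rewrite ea; exact: Dn.
  move=> [hl|hs]; first exact: (notL0 Qx hl).
  have [h0 h2] := isInfY_xz hs.
  have : gact A t (lift2 i v) zr 0 != 0 by rewrite ea; exact: Dn.
  by move/Hzr; rewrite h0 h2 eqxx; case.
- have -> : Pi_loc A i j = fun t v => lin (fun l => a l t) v / lin (fun l => b l t) v.
    by apply/funext => t; apply/funext => v; rewrite /Pi_loc Hch !ea.
  exact: tW.
Qed.
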